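(* Let $n,k\in\mathbb{N}$, $\alpha\in(0,\infty)$, and let $\vec{d}=(d_1,\dots,d_n)$ be given. (i) Let $Z_{n,1},\dots,Z_{n,n}$ be IID with $P(Z_{n,j}=d)=\frac{\alpha^{\overline{d}}}{d!}\left(\frac{\alpha}{\alpha+k}\right)^{\alpha}\left(\frac{k}{\alpha+k}\right)^{d}$ for $d=0,1,2,\dots$, and $\vec{Z}_n=(Z_{n,1},\dots,Z_{n,n})$. Then $P(\vec{D}_n^{\alpha}=\vec{d})=P(\vec{Z}_n=\vec{d}\mid Z_{n,1}+\cdots+Z_{n,n}=kn)$. (ii) Let $Y_{n,1},\dots,Y_{n,n}$ be IID Poisson random variables with mean $k$ and $\vec{Y}_n=(Y_{n,1},\dots,Y_{n,n})$. Then $P(\vec{D}_n^{\infty}=\vec{d})=P(\vec{Y}_n=\vec{d}\mid Y_{n,1}+\cdots+Y_{n,n}=kn)$.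
   Context: A $k$-out map on $[n]$ is a map $M:[n]\to[n]^k$; the in-degree of vertex $j$ is the total number of coordinates, over all vertices and all $k$ labels, of the images equal to $j$. For $\alpha\in(0,\infty)$, the random $k$-out map $M_{n,k}^{\alpha}$ has law $P(M_{n,k}^{\alpha}=M)=\prod_{j=1}^n \alpha^{\overline{d_j}}/(\alpha n)^{\overline{kn}}$, where $(d_1,\dots,d_n)$ is the in-degree sequence of $M$ and $x^{\overline{y}}=x(x+1)\cdots(x+y-1)$ (it arises from a preferential attachment process where each vertex has initial weight $\alpha$ and each chosen image gains weight $1$). $M_{n,k}^{\infty}$ is the uniformly random $k$-out map on $[n]$. $\vec{D}_n^{\alpha}=(D_{n,1}^{\alpha},\dots,D_{n,n}^{\alpha})$ and $\vec{D}_n^{\infty}$ denote the in-degree sequences of $M_{n,k}^{\alpha}$ and $M_{n,k}^{\infty}$ respectively. *)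

(* Defs.v *)
From mathcomp Require Import all_boot all_order all_algebra.
From mathcomp Require Import reals sequences exp.
Set Implicit Arguments. Unset Strict Implicit. Unset Printing Implicit Defensive.
Import Order.TTheory GRing.Theory Num.Theory.
Local Open Scope ring_scope.

(* A k-out map on [n] = 'I_n : each vertex i has k labelled images M i l. *)
Definition kout_map (n k : nat) := {ffun 'I_n -> {ffun 'I_k -> 'I_n}}.

Definition indeg (n k : nat) (M : kout_map n k) (j : 'I_n) : nat :=
  (\sum_(i < n) \sum_(l < k) (M i l == j))%N.

Definition indeg_seq (n k : nat) (M : kout_map n k) : {ffun 'I_n -> nat} :=
  [ffun j => indeg M j].

Definition rising (R : pzRingType) (x : R) (y : nat) : R :=
  \prod_(i < y) (x + i%:R).

Definition P_map_alpha (R : realType) (n k : nat) (alpha : R) (M : kout_map n k) : R :=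
  (\prod_(j < n) rising alpha (indeg M j)) / rising (alpha * n%:R) (k * n).

Definition P_map_unif (R : realType) (n k : nat) (M : kout_map n k) : R :=
  1 / (n%:R ^+ (k * n)).

Definition P_D_alpha (R : realType) (n k : nat) (alpha : R) (d : {ffun 'I_n -> nat}) : R :=
  \sum_(M : kout_map n k | indeg_seq M == d) P_map_alpha alpha M.

Definition P_D_unif (R : realType) (n k : nat) (d : {ffun 'I_n -> nat}) : R :=
  \sum_(M : kout_map n k | indeg_seq M == d) P_map_unif R M.

Definition pmf_Z (R : realType) (k : nat) (alpha : R) (d : nat) : R :=
  rising alpha d / (d`!)%:R * (alpha / (alpha + k%:R)) `^ alpha
    * (k%:R / (alpha + k%:R)) ^+ d.

Definition pmf_Poisson (R : realType) (k : nat) (d : nat) : R :=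
  expR (- k%:R) * k%:R ^+ d / (d`!)%:R.

(* For IID variables X_1..X_n with common pmf p on nat:
   P(X = d) = \prod_j p (d_j), and
   P(X = d | X_1 + ... + X_n = s) = P(X = d, sum X = s) / P(sum X = s),
   where P(sum X = s) = sum over all e in nat^n with sum e = s of \prod_j p (e_j).
   Every such e has entries <= s, so it is enumerated exactly once as a
   finite function 'I_n -> 'I_s.+1. *)
Definition P_iid_vec (R : realType) (p : nat -> R) (n : nat) (d : {ffun 'I_n -> nat}) : R :=
  \prod_(j < n) p (d j).

Definition P_iid_sum (R : realType) (p : nat -> R) (n s : nat) : R :=
  \sum_(e : {ffun 'I_n -> 'I_s.+1} | (\sum_(j < n) (e j : nat))%N == s)
     \prod_(j < n) p (e j).

Definition P_iid_cond (R : realType) (p : nat -> R) (n s : nat) (d : {ffun 'I_n -> nat}) : R :=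
  (if (\sum_(j < n) d j)%N == s then P_iid_vec p d else 0) / P_iid_sum p n s.

(* Main.v *)
Require Import Defs.
From mathcomp Require Import all_boot all_order all_algebra.
From mathcomp Require Import reals sequences exp.
From mathcomp Require Import zify ring lra.
Import Order.TTheory GRing.Theory Num.Theory.
Local Open Scope ring_scope.
Local Close Scope ring_scope.
Set Implicit Arguments. Unset Strict Implicit. Unset Printing Implicit Defensive.

Definition cnt (m n : nat) (f : {ffun 'I_m -> 'I_n}) (j : 'I_n) : nat :=
  (\sum_(x < m) (f x == j))%N.
Definition cntseq (m n : nat) (f : {ffun 'I_m -> 'I_n}) : {ffun 'I_n -> nat} :=
  [ffun j => cnt f j].
Definition ext (m n : nat) (t : 'I_n) (g : {ffun 'I_m -> 'I_n}) : {ffun 'I_m.+1 -> 'I_n} :=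
  [ffun i => if unlift ord0 i is Some j then g j else t].
Definition unext (m n : nat) (t0 : 'I_n) (f : {ffun 'I_m.+1 -> 'I_n}) : 'I_n * {ffun 'I_m -> 'I_n} :=
  (f ord0, [ffun j => f (lift ord0 j)]).

Lemma ext_bij m n : bijective (fun p : 'I_n * {ffun 'I_m -> 'I_n} => ext p.1 p.2).
Proof.
have [t0|n0] := (boolP (0 < n)%N).
  exists (unext (Ordinal t0)).
  - move=> [t g] /=; rewrite /unext /ext /= !ffunE unlift_none; congr pair.
    by apply/ffunP => j; rewrite !ffunE liftK.
  - move=> f; rewrite /unext /ext /=; apply/ffunP => i; rewrite !ffunE.
    by case: unliftP => [j ->|->]; rewrite ?ffunE.
exists (fun f : {ffun 'I_m.+1 -> 'I_n} => (f ord0, [ffun j => f (lift ord0 j)])).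
- move=> [t g] /=; rewrite /ext /= !ffunE unlift_none; congr pair.
  by apply/ffunP => j; rewrite !ffunE liftK.
- move=> f; rewrite /ext /=; apply/ffunP => i; rewrite !ffunE.
  by case: unliftP => [j ->|->]; rewrite ?ffunE.
Qed.

Lemma sum_ext (T : Type) (idx : T) (op : Monoid.com_law idx) m n
  (G : {ffun 'I_m.+1 -> 'I_n} -> T) :
  \big[op/idx]_(f : {ffun 'I_m.+1 -> 'I_n}) G f =
  \big[op/idx]_(t : 'I_n) \big[op/idx]_(g : {ffun 'I_m -> 'I_n}) G (ext t g).
Proof.
rewrite pair_big /=.
rewrite (reindex (fun p : 'I_n * {ffun 'I_m -> 'I_n} => ext p.1 p.2)) //.
by apply: onW_bij; apply: ext_bij.
Qed.

Lemma cnt_ext m n t (g : {ffun 'I_m -> 'I_n}) j :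
  cnt (ext t g) j = ((t == j) + cnt g j)%N.
Proof.
rewrite /cnt big_ord_recl /ext ffunE unlift_none; congr addn.
by apply: eq_bigr => x _; rewrite ffunE liftK.
Qed.

Lemma sum_cnt m n (f : {ffun 'I_m -> 'I_n}) : (\sum_(j < n) cnt f j)%N = m.
Proof.
rewrite /cnt exchange_big /=.
rewrite -[RHS]card_ord -sum1_card; apply: eq_bigr => x _.
by rewrite -big_mkcond /= (eq_bigl (fun j => j == f x)) ?big_pred1_eq // => j; rewrite eq_sym.
Qed.

Lemma cnt_le m n (f : {ffun 'I_m -> 'I_n}) j : (cnt f j <= m)%N.
Proof. by rewrite -{2}(sum_cnt f) (bigD1 j) //= leq_addr. Qed.

Definition Nc (m n : nat) (d : {ffun 'I_n -> nat}) : nat :=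
  (\sum_(f : {ffun 'I_m -> 'I_n} | cntseq f == d) 1)%N.

Definition dm n (d : {ffun 'I_n -> nat}) (t : 'I_n) : {ffun 'I_n -> nat} :=
  [ffun j => d j - (t == j)].

Lemma Nc_step m n (d : {ffun 'I_n -> nat}) :
  Nc m.+1 d = (\sum_(t < n | 0 < d t) Nc m (dm d t))%N.
Proof.
rewrite /Nc big_mkcond /= sum_ext [RHS]big_mkcond /=; apply: eq_bigr => t _.
case: ifP => dt.
  rewrite [RHS]big_mkcond /=. apply: eq_bigr => g _.
  congr (if _ then _ else _); apply/eqP/eqP => E; apply/ffunP => j.
    move/ffunP: E => /(_ j); rewrite !ffunE cnt_ext => <-; lia.
  move/ffunP: E => /(_ j); rewrite !ffunE cnt_ext => ->.
  case: eqP => [<-|] /=; lia.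
apply: big1 => g _; case: eqP => // /ffunP /(_ t); rewrite ffunE cnt_ext eqxx.
move: dt; rewrite /=; lia.
Qed.

Lemma Nc_fact m n (d : {ffun 'I_n -> nat}) :
  (Nc m d * \prod_(j < n) (d j)`! = if \sum_(j < n) d j == m then m`! else 0)%N.
Proof.
elim: m d => [|m IH] d.
  rewrite /Nc.
  have [d0|] := boolP [forall j, d j == 0%N].
    have Ed : \sum_(j < n) d j = 0%N by apply: big1 => j _; apply/eqP; move/forallP: d0.
    have Pd : (\prod_(j < n) (d j)`! = 1)%N by apply: big1 => j _; rewrite (eqP (forallP d0 j)).
    rewrite Ed eqxx Pd muln1.
    rewrite (eq_bigl predT) ?sum1_card ?card_ffun ?card_ord ?expn0 //.
    move=> f /=; apply/eqP/ffunP => j; rewrite !ffunE (eqP (forallP d0 j)).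
    by rewrite /cnt big_ord0.
  move/forallPn => [j /negP dj].
  rewrite big1 ?mul0n; last first.
    move=> f /eqP/ffunP /(_ j); rewrite ffunE /cnt big_ord0 => E; exfalso; apply: dj; rewrite -E.
    done.
  case: eqP => // /eqP; rewrite sum_nat_eq0 => /forallP /(_ j) /implyP /(_ isT).
  by move/dj.
rewrite Nc_step big_distrl /=.
have E : forall t, (0 < d t)%N ->
  (Nc m (dm d t) * \prod_(j < n) (d j)`! =
   d t * (Nc m (dm d t) * \prod_(j < n) (dm d t j)`!))%N.
  move=> t dt; rewrite (bigD1 t) //= [in RHS](bigD1 t) //=.
  have -> : (\prod_(j < n | j != t) (dm d t j)`! = \prod_(j < n | j != t) (d j)`!)%N.
    by apply: eq_bigr => j jt; rewrite /dm ffunE eq_sym (negbTE jt) subn0.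
  rewrite /dm ffunE eqxx.
  have -> : (d t)`! = (d t * (d t - 1)`!)%N.
    by case: (d t) dt => // x _; rewrite factS subSS subn0.
  by rewrite [in RHS]mulnCA !mulnA.
rewrite (eq_bigr _ (fun t dt => E t dt)) {E}.
under eq_bigr => t dt do rewrite IH.
have Sd : forall t, (0 < d t)%N -> (\sum_(j < n) dm d t j = (\sum_(j < n) d j) - 1)%N.
  move=> t dt; rewrite (bigD1 t) //= [in RHS](bigD1 t) //=.
  have -> : (\sum_(j < n | j != t) dm d t j = \sum_(j < n | j != t) d j)%N.
    by apply: eq_bigr => j jt; rewrite /dm ffunE eq_sym (negbTE jt) subn0.
  rewrite /dm ffunE eqxx.
  change (nat_of_bool true) with 1%N; move: dt (\sum_(j < n | j != t) d j) => dt S. lia.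
case: eqP => [Hs|Hs].
  rewrite (eq_bigr (fun t => d t * m`!)%N); last by move=> t dt; rewrite Sd // Hs subn1 /= eqxx.
  rewrite -big_distrl /= factS -Hs; congr (_ * _).
  rewrite [RHS](bigID (fun t => 0 < d t)) /= [X in _ = _ + X]big1 ?addn0 // => t.
  by rewrite -eqn0Ngt => /eqP.
apply: big1 => t dt; rewrite Sd //.
case: eqP => [E|]; last by rewrite muln0.
exfalso; apply: Hs.
have : (d t <= \sum_(j < n) d j)%N by rewrite (bigD1 t) //= leq_addr.
move: dt E; move: (d t) (\sum_(j < n) d j) => a b; lia.
Qed.

Local Open Scope ring_scope.

Lemma risingS (R : pzRingType) (x : R) c : rising x c.+1 = rising x c * (x + c%:R).
Proof. by rewrite /rising big_ord_recr. Qed.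

Lemma prod_rising_ext (R : comPzRingType) m n (a : R) t (g : {ffun 'I_m -> 'I_n}) :
  \prod_(j < n) rising a (cnt (ext t g) j) =
  (a + (cnt g t)%:R) * \prod_(j < n) rising a (cnt g j).
Proof.
rewrite (bigD1 t) //= [in RHS](bigD1 t) //= cnt_ext eqxx add1n risingS.
rewrite (eq_bigr (fun j => rising a (cnt g j))); last first.
  by move=> j jt; rewrite cnt_ext eq_sym (negbTE jt) add0n.
by rewrite mulrCA mulrA.
Qed.

Lemma sum_rising (R : comPzRingType) m n (a : R) :
  \sum_(f : {ffun 'I_m -> 'I_n}) \prod_(j < n) rising a (cnt f j) = rising (a * n%:R) m.
Proof.
elim: m => [|m IH].
  rewrite /rising big_ord0.
  rewrite (eq_bigr (fun _ => 1)); last first.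
    by move=> f _; apply: big1 => j _; rewrite /cnt big_ord0 big_ord0.
  by rewrite sumr_const card_ffun !card_ord expn0.
rewrite sum_ext.
under eq_bigr => t _ do under eq_bigr => g _ do rewrite prod_rising_ext.
rewrite exchange_big /= risingS -IH mulr_suml; apply: eq_bigr => g _.
rewrite -mulr_suml mulrC; congr (_ * _).
rewrite big_split /= sumr_const card_ord -natr_sum sum_cnt.
by rewrite mulr_natr.
Qed.

Lemma group_sum (R : comPzRingType) m n (w : nat -> R) :
  \sum_(f : {ffun 'I_m -> 'I_n}) \prod_(j < n) w (cnt f j) =
  \sum_(e : {ffun 'I_n -> 'I_m.+1} | (\sum_(j < n) (e j : nat))%N == m)
     (Nc m [ffun j => (e j : nat)])%:R * \prod_(j < n) w (e j).
Proof.
pose p (f : {ffun 'I_m -> 'I_n}) : {ffun 'I_n -> 'I_m.+1} := [ffun j => inord (cnt f j)].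
have pE f j : (p f j : nat) = cnt f j by rewrite ffunE inordK // ltnS cnt_le.
rewrite (partition_big p (fun e : {ffun 'I_n -> 'I_m.+1} => (\sum_(j < n) (e j : nat))%N == m)) /=; last first.
  move=> f _; rewrite (eq_bigr (fun j => cnt f j)) ?sum_cnt // => j _; exact: pE.
apply: eq_bigr => e He.
have Pe f : (p f == e) = (cntseq f == [ffun j => (e j : nat)]).
  apply/eqP/eqP => H; apply/ffunP => j.
    by rewrite !ffunE -H pE.
  by apply: val_inj; rewrite /= pE; move/ffunP: H => /(_ j); rewrite !ffunE.
rewrite (eq_bigl (fun f => cntseq f == [ffun j => (e j : nat)])) //.
rewrite (eq_bigr (fun _ => \prod_(j < n) w (e j))); last first.
  move=> f /eqP /ffunP H; apply: eq_bigr => j _; move: (H j); rewrite !ffunE => ->.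
  done.
by rewrite sumr_const /Nc sum1_card mulr_natl.
Qed.

Local Close Scope ring_scope.

Section T.
Variables (n k : nat).
Let E : #|{: 'I_n * 'I_k}| = (k * n)%N.
Proof. by rewrite card_prod !card_ord mulnC. Qed.
Let idx (p : 'I_n * 'I_k) : 'I_(k * n) := cast_ord E (enum_rank p).
Let idxi (x : 'I_(k * n)) : 'I_n * 'I_k := enum_val (cast_ord (esym E) x).
Let idxK : cancel idx idxi.
Proof. by move=> p; rewrite /idx /idxi cast_ordK enum_rankK. Qed.
Let idxiK : cancel idxi idx.
Proof. by move=> x; rewrite /idx /idxi enum_valK cast_ordKV. Qed.

Let h (f : {ffun 'I_(k * n) -> 'I_n}) : kout_map n k :=
  [ffun i => [ffun l => f (idx (i, l))]].
Let hi (M : kout_map n k) : {ffun 'I_(k * n) -> 'I_n} :=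
  [ffun x => M (idxi x).1 (idxi x).2].

Let h_bij : bijective h.
Proof.
exists hi.
  by move=> f; apply/ffunP => x; rewrite !ffunE -surjective_pairing idxiK.
move=> M; apply/ffunP => i; apply/ffunP => l; rewrite !ffunE idxK //.
Qed.

Let indeg_h f : indeg_seq (h f) = cntseq f.
Proof.
apply/ffunP => j; rewrite !ffunE /indeg /cnt.
rewrite (eq_bigr (fun i => \sum_(l < k) (f (idx (i, l)) == j)%N)); last first.
  by move=> i _; apply: eq_bigr => l _; rewrite !ffunE.
rewrite pair_big /=.
rewrite [RHS](reindex idx) //; last by apply: onW_bij; exists idxi.
by apply: eq_bigr => -[i l] _.
Qed.

Lemma transport (T : Type) (id : T) (op : Monoid.com_law id) (F : {ffun 'I_n -> nat} -> T) :
  \big[op/id]_(M : kout_map n k) F (indeg_seq M) =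
  \big[op/id]_(f : {ffun 'I_(k * n) -> 'I_n}) F (cntseq f).
Proof.
rewrite (reindex h) //=; last by apply: onW_bij.
by apply: eq_bigr => f _; rewrite indeg_h.
Qed.
End T.

Local Open Scope ring_scope.


Lemma fact_neq0 (R : numFieldType) x : (x`!)%:R != 0 :> R.
Proof. by rewrite pnatr_eq0 -lt0n fact_gt0. Qed.

Lemma prodfact_neq0 (R : numFieldType) n (e : 'I_n -> nat) :
  \prod_(j < n) ((e j)`!)%:R != 0 :> R.
Proof. by rewrite prodf_seq_neq0; apply/allP => j _; apply: fact_neq0. Qed.

Lemma Nc_val (R : numFieldType) m n (d : {ffun 'I_n -> nat}) :
  (Nc m d)%:R = if (\sum_(j < n) d j)%N == m then (m`!)%:R / \prod_(j < n) ((d j)`!)%:R else 0 :> R.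
Proof.
have H := Nc_fact m d.
have H' : (Nc m d)%:R * \prod_(j < n) ((d j)`!)%:R = (if (\sum_(j < n) d j)%N == m then m`! else 0%N)%:R :> R.
  by rewrite -natr_prod -natrM H.
case: ifP H' => _ H'.
  by rewrite -H' mulfK // prodfact_neq0.
by apply/eqP; move/eqP: H'; rewrite mulf_eq0 (negbTE (prodfact_neq0 _ _)) orbF.
Qed.

Lemma sumN (R : numFieldType) m n (w : nat -> R) :
  \sum_(e : {ffun 'I_n -> 'I_m.+1} | (\sum_(j < n) (e j : nat))%N == m)
     \prod_(j < n) (w (e j) / ((e j : nat)`!)%:R) =
  (\sum_(f : {ffun 'I_m -> 'I_n}) \prod_(j < n) w (cnt f j)) / (m`!)%:R.
Proof.
rewrite group_sum mulr_suml; apply: eq_bigr => e He.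
rewrite Nc_val.
have -> : (\sum_(j < n) [ffun j0 => (e j0 : nat)] j)%N = (\sum_(j < n) (e j : nat))%N.
  by apply: eq_bigr => j _; rewrite ffunE.
rewrite He prodf_div.
have -> : \prod_(j < n) (([ffun j0 => (e j0 : nat)] j)`!)%:R = \prod_(j < n) ((e j : nat)`!)%:R :> R.
  by apply: eq_bigr => j _; rewrite ffunE.
rewrite [RHS]mulrAC [X in _ = X * _]mulrAC divff ?fact_neq0 // mul1r mulrC.
done.
Qed.


Lemma cond_general (R : realType) n s (p w : nat -> R) (K : R) (d : {ffun 'I_n -> nat}) :
  K != 0 ->
  (forall e : 'I_n -> nat, (\sum_(j < n) e j)%N = s ->
     \prod_(j < n) p (e j) = \prod_(j < n) (w (e j) / ((e j)`!)%:R) * K) ->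
  \sum_(f : {ffun 'I_s -> 'I_n}) \prod_(j < n) w (cnt f j) != 0 ->
  P_iid_cond p s d = (Nc s d)%:R * \prod_(j < n) w (d j) /
     \sum_(f : {ffun 'I_s -> 'I_n}) \prod_(j < n) w (cnt f j).
Proof.
move=> K0 Hp T0; rewrite /P_iid_cond /P_iid_sum /P_iid_vec.
rewrite (eq_bigr (fun e : {ffun 'I_n -> 'I_s.+1} => \prod_(j < n) (w (e j) / ((e j : nat)`!)%:R) * K)); last first.
  by move=> e /eqP He; apply: (Hp (fun j => (e j : nat))).
rewrite -mulr_suml sumN Nc_val.
case: eqP => Hd; last by rewrite !mul0r.
rewrite Hp // prodf_div.
have F0 := fact_neq0 R s.
have P0 := prodfact_neq0 R d.
field.
by rewrite F0 P0 T0 K0.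
Qed.

Unset Implicit Arguments.


Theorem lemma1 (R : realType) (n k : nat) (d : {ffun 'I_n -> nat}) :
  (forall alpha : R, 0 < alpha ->
     P_D_alpha k alpha d = P_iid_cond (pmf_Z k alpha) (k * n) d) /\
  P_D_unif R k d = P_iid_cond (pmf_Poisson R k) (k * n) d.
Proof.
split.
- move=> a a0.
  pose R0 := rising (a * n%:R) (k * n).
  pose F := fun e : {ffun 'I_n -> nat} =>
    if e == d then \prod_(j < n) rising a (d j) / R0 else 0.
  have LHS : P_D_alpha k a d = (Nc (k * n) d)%:R * (\prod_(j < n) rising a (d j) / R0).
    rewrite /P_D_alpha /P_map_alpha big_mkcond /=.
    rewrite (eq_bigr (fun M => F (indeg_seq M))); last first.
      move=> M _; rewrite /F; case: eqP => // <-; congr (_ / _).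
      by apply: eq_bigr => j _; rewrite ffunE.
    rewrite (@transport n k _ _ _ F) /F -big_mkcond /= sumr_const /Nc sum1_card.
    by rewrite mulr_natl.
  have ak : 0 < a + k%:R by have := ler0n R k; lra.
  pose C := (a / (a + k%:R)) `^ a.
  pose q := k%:R / (a + k%:R).
  have C0 : C != 0 by rewrite gt_eqF // powR_gt0 // divr_gt0.
  have q0 : q ^+ (k * n) != 0.
    case: (posnP k) => [k0|kp]; first by rewrite k0 mul0n expr0 oner_neq0.
    by rewrite expf_neq0 // mulf_neq0 ?invr_eq0 ?gt_eqF // ltr0n.
  have R00 : R0 != 0.
    rewrite /R0; case: (posnP n) => [n0|np]; first by rewrite n0 muln0 /rising big_ord0 oner_neq0.
    rewrite /rising prodf_seq_neq0; apply/allP => i _; rewrite gt_eqF //.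
    have : 0 < a * n%:R by rewrite mulr_gt0 // ltr0n.
    have := ler0n R i; lra.
  rewrite LHS (@cond_general R n (k * n) _ (rising a) (C ^+ n * q ^+ (k * n))).
  + by rewrite sum_rising mulrA.
  + by rewrite mulf_neq0 // expf_neq0.
  + move=> e He; rewrite /pmf_Z -/C -/q big_split big_split /= prodr_const card_ord.
    by rewrite prodrXr He mulrA.
  + by rewrite sum_rising.
- pose Pn := n%:R ^+ (k * n) : R.
  pose F := fun e : {ffun 'I_n -> nat} => if e == d then 1 / Pn else 0.
  have LHS : P_D_unif R k d = (Nc (k * n) d)%:R * (1 / Pn).
    rewrite /P_D_unif /P_map_unif big_mkcond /=.
    rewrite (eq_bigr (fun M => F (indeg_seq M))); last first.
      by move=> M _; rewrite /F; case: eqP.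
    rewrite (@transport n k _ _ _ F) /F -big_mkcond /= sumr_const /Nc sum1_card.
    by rewrite mulr_natl.
  have T : \sum_(f : {ffun 'I_(k * n) -> 'I_n}) \prod_(j < n) (fun _ => 1 : R) (cnt f j) = Pn.
    rewrite (eq_bigr (fun _ => 1)); last by move=> f _; apply: big1.
    by rewrite sumr_const card_ffun !card_ord /Pn -natrX.
  have Pn0 : Pn != 0.
    rewrite /Pn; case: (posnP n) => [n0|np]; first by rewrite n0 muln0 expr0 oner_neq0.
    by rewrite expf_neq0 // pnatr_eq0 -lt0n.
  have k0 : k%:R ^+ (k * n) != 0 :> R.
    case: (posnP k) => [k0|kp]; first by rewrite k0 mul0n expr0 oner_neq0.
    by rewrite expf_neq0 // pnatr_eq0 -lt0n.
  rewrite LHS (@cond_general R n (k * n) _ (fun _ => 1) (expR (- k%:R) ^+ n * k%:R ^+ (k * n))).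
  + by rewrite T big1_eq mulr1 mul1r.
  + by rewrite mulf_neq0 // expf_neq0 // gt_eqF // expR_gt0.
  + move=> e He; rewrite /pmf_Poisson.
    rewrite (eq_bigr (fun j => 1 / ((e j)`!)%:R * (expR (- k%:R) * k%:R ^+ e j))); last first.
      by move=> j _; rewrite mulrC mul1r mulrA.
    rewrite big_split /= [X in _ * X]big_split /= prodr_const card_ord prodrXr He.
    done.
  + by rewrite T.
Qed.
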